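(* Let $\mathcal{O}$, $n$, $\alpha,\beta$ and $\rho=\rho^1\cdots\rho^k$ with index sets $\mathcal{L},\mathcal{N}$ be as in the standing setup. Then $$\sum_{i\in\mathcal{L}}\mathrm{len}(\rho^i)+\sum_{i\in\mathcal{N}}\bigl(\mathrm{len}(\rho^i_{\mathrm{pref}})+\mathrm{len}(\rho^i_{\mathrm{suff}})\bigr)\le 5n^2.$$
   Context: $\mathbb{N}=\{0,1,2,\dots\}$. A one-counter system (OCS) $\mathcal{O}$ consists of a finite set $Q$ of states, a set $T_{>0}\subseteq Q\times\{-1,0,1\}\times Q$ of non-zero transitions and a set $T_{=0}\subseteq Q\times\{0,1\}\times Q$ of zero tests. A configuration is a pair $(q,c)\in Q\times\mathbb{N}$ (state $q$, counter value $c$). A transition $t=(p,d,q)$ has source $p$, target $q$, effect $d$; it can be fired in $(p,c)$ if either $t\in T_{>0}$ and $c>0$, or $t\in T_{=0}$ and $c=0$, yielding $(q,c+d)$. A path is a sequence $(\gamma_1,t_1)\cdots(\gamma_m,t_m)$ such that, with some $\gamma_{m+1}$, firing $t_i$ in $\gamma_i$ yields $\gamma_{i+1}$ for all $i\le m$; its source is $\gamma_1$, target $\gamma_{m+1}$, length $\mathrm{len}=m$, configurations appearing on it are $\gamma_1,\dots,\gamma_{m+1}$, intermediate ones are $\gamma_2,\dots,\gamma_m$; its projection is $\mathrm{proj}=t_1\cdots t_m$ and its effect $\mathrm{eff}$ is the sum of the effects of its transitions. A sequence of transitions is consistent if each transition's target is the next one's source. A cycle is a consistent sequence of non-zero transitions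 starting and ending in the same state (its base state); positive/negative if its effect is positive/negative; simple if no state is visited twice except the base at start and end. The transition multigraph $G$ has vertices $Q$ and an edge $p\to q$ labelled $d$ for each $(p,d,q)\in T_{>0}$; $\mathfrak{S}$ is the set of its SCCs and $n_S$ the number of states in $S\in\mathfrak{S}$. A cycle is contained in $S$ if all its states lie in $S$; $S$ is positively (negatively) enabled if it contains a positive (negative) cycle. For every positively enabled $S$ a simple positive cycle $\sigma^+_S$ contained in $S$ is fixed, and for every negatively enabled $T$ a simple negative cycle $\sigma^-_T$ contained in $T$. An arc is a path whose source and target have counter value $0$ and whose intermediate configurations have positive counter value. A path is low if all configurations appearing on it have counter value $<5n$, where $n=|Q|$. For $S,T\in\mathfrak{S}$, an arc $\rho$ is $(S,T)$-normal if $\rho=\rho_{\mathrm{pref}}\rho_{\mathrm{up}}\rho_{\mathrm{cap}}\rho_{\mathrm{down}}\rho_{\mathrm{suff}}$ (normal decomposition) with $\rho_{\mathrm{pref}},\rho_{\mathrm{suff}}$ low, $\mathrm{proj}(\rho_{\mathrm{up}})=(\sigma^+_S)^a$, $\mathrm{proj}(\rho_{\mathrm{down}})=(\sigma^-_T)^b$ for some $a,b\in\mathbb{N}$, the source of $\rho_{\mathrm{cap}}$ having the base state of $\sigma^+_S$ and its target the base state of $\sigma^-_T$. Writing $A=\mathrm{eff}(\sigma^+_S)$, $B=-\mathrm{eff}(\sigma^-_T)$, such a decomposition is good if: (iii) $aA\le 2\,\mathrm{len}(\rho_{\mathrm{cap}})+2\,\mathrm{lcm}(A,B)$; (iv) $bB\le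 2\,\mathrm{len}(\rho_{\mathrm{cap}})+2\,\mathrm{lcm}(A,B)$; (v) no infix of $\mathrm{proj}(\rho_{\mathrm{cap}})$ is a cycle with effect divisible by $\gcd(A,B)$; (vi) the target of $\rho_{\mathrm{up}}$ and the source of $\rho_{\mathrm{down}}$ have counter values $>n$; (vii) all configurations appearing on $\rho_{\mathrm{pref}}$ and $\rho_{\mathrm{suff}}$ together are pairwise distinct. Standing setup: $\alpha,\beta$ are configurations with counter value $0$; $\rho=\rho^1\rho^2\cdots\rho^k$ is a path from $\alpha$ to $\beta$ that has the minimum possible number of appearing configurations with counter value $0$ among all paths from $\alpha$ to $\beta$; each $\rho^i$ is an arc; $\{1,\dots,k\}=\mathcal{L}\sqcup\mathcal{N}$ where for $i\in\mathcal{L}$, $\rho^i$ is a low arc of minimum length among all low arcs with the same source and target, and for $i\in\mathcal{N}$, $\rho^i$ is $(S_i,T_i)$-normal for some $S_i,T_i\in\mathfrak{S}$ with a fixed good normal decomposition $\rho^i=\rho^i_{\mathrm{pref}}\rho^i_{\mathrm{up}}\rho^i_{\mathrm{cap}}\rho^i_{\mathrm{down}}\rho^i_{\mathrm{suff}}$. For $S,T\in\mathfrak{S}$: $\mathcal{N}_{(S,T)}=\{i\in\mathcal{N}: (S_i,T_i)=(S,T)\}$, $\mathcal{N}_{(S,\cdot)}=\{i\in\mathcal{N}:S_i=S\}$, $\mathcal{N}_{(\cdot,T)}=\{i\in\mathcal{N}:T_i=T\}$. *)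

(* Defs.v *)
From mathcomp Require Import all_boot all_order all_algebra.
Set Implicit Arguments. Unset Strict Implicit. Unset Printing Implicit Defensive.
Import GRing.Theory Num.Theory.

Definition trans (Q : finType) := (Q * int * Q)%type.
(* configurations (state, counter value) *)
Definition config (Q : finType) := (Q * nat)%type.

Record OCS (Q : finType) := MkOCS {
  Tpos : pred (trans Q);
  Tzero : pred (trans Q);
  Tpos_eff : forall t, Tpos t -> t.1.2 \in [:: (-1)%R; 0%R; 1%R];
  Tzero_eff : forall t, Tzero t -> t.1.2 \in [:: 0%R; 1%R]
}.

Section OCSDefs.
Variables (Q : finType) (O : OCS Q).

Definition tsrc (t : trans Q) : Q := t.1.1.
Definition teff (t : trans Q) : int := t.1.2.
Definition ttgt (t : trans Q) : Q := t.2.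

Definition can_fire (c : config Q) (t : trans Q) : bool :=
  (tsrc t == c.1) && ((Tpos O t && (0 < c.2)%N) || (Tzero O t && (c.2 == 0)%N)).

(* the configuration obtained by firing t in c (meaningful when can_fire c t) *)
Definition step (c : config Q) (t : trans Q) : config Q :=
  (ttgt t, `|(c.2%:Z + teff t)%R|%N).

(* A opath is given by its source configuration and its projection;
   the configurations appearing on it are determined by these. *)
Record opath := OPath { psrc : config Q; ptrs : seq (trans Q) }.

Fixpoint valid_from (c : config Q) (ts : seq (trans Q)) : bool :=
  if ts is t :: ts' then can_fire c t && valid_from (step c t) ts' else true.

Fixpoint cfgs_from (c : config Q) (ts : seq (trans Q)) : seq (config Q) :=
  c :: (if ts is t :: ts' then cfgs_from (step c t) ts' else [::]).

Definition valid (p : opath) : bool := valid_from (psrc p) (ptrs p).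
(* configurations appearing on p: gamma_1, ..., gamma_{m+1} *)
Definition cfgs (p : opath) : seq (config Q) := cfgs_from (psrc p) (ptrs p).
Definition ptgt (p : opath) : config Q := foldl step (psrc p) (ptrs p).
Definition len (p : opath) : nat := size (ptrs p).
(* intermediate configurations gamma_2, ..., gamma_m *)
Definition intermediate (p : opath) : seq (config Q) :=
  take (len p).-1 (behead (cfgs p)).

Definition eff (s : seq (trans Q)) : int := (\sum_(t <- s) teff t)%R.

Definition path_from_to (p : opath) (a b : config Q) : Prop :=
  valid p /\ psrc p = a /\ ptgt p = b.

Definition zcount (p : opath) : nat := count (fun c : config Q => c.2 == 0%N) (cfgs p).

Definition is_arc (p : opath) : bool :=
  [&& valid p, (psrc p).2 == 0%N, (ptgt p).2 == 0%N &
      all (fun c : config Q => (0 < c.2)%N) (intermediate p)].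

Definition n_states : nat := #|Q|.

Definition low (p : opath) : bool :=
  all (fun c : config Q => (c.2 < 5 * n_states)%N) (cfgs p).

Definition consistent (s : seq (trans Q)) : bool :=
  sorted (fun t u : trans Q => ttgt t == tsrc u) s.

Definition is_cycle (s : seq (trans Q)) : bool :=
  if s is t :: s' then
    [&& all (Tpos O) s, consistent s & ttgt (last t s') == tsrc t]
  else false.

Definition base (s : seq (trans Q)) : option Q :=
  if s is t :: _ then Some (tsrc t) else None.

Definition simple (s : seq (trans Q)) : bool := uniq (map tsrc s).

Definition contained (S : {set Q}) (s : seq (trans Q)) : bool :=
  all (fun t => (tsrc t \in S) && (ttgt t \in S)) s.

Definition edge : rel Q :=
  fun p q => has (fun d : int => Tpos O (p, d, q)) [:: (-1)%R; 0%R; 1%R].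

Definition is_scc (S : {set Q}) : Prop :=
  exists p : Q, S = [set q | connect edge p q && connect edge q p].

Definition pos_enabled (S : {set Q}) : Prop :=
  exists s, [&& is_cycle s, contained S s & (0 < eff s)%R].
Definition neg_enabled (S : {set Q}) : Prop :=
  exists s, [&& is_cycle s, contained S s & (eff s < 0)%R].

(* a normal decomposition rho = pref up cap down suff, with exponents a, b *)
Record ndec := NDec {
  dpref : opath; dup : opath; dcap : opath; ddown : opath; dsuff : opath;
  da : nat; db : nat }.

Section Normal.
Variables (sigp sign : {set Q} -> seq (trans Q)).

Definition normal_dec (S T : {set Q}) (rho : opath) (d : ndec) : Prop :=
  [/\ is_scc S, is_scc T, pos_enabled S & neg_enabled T] /\
  is_arc rho /\
  [/\ valid (dpref d), valid (dup d), valid (dcap d), valid (ddown d) & valid (dsuff d)] /\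
  [/\ psrc (dpref d) = psrc rho, psrc (dup d) = ptgt (dpref d),
      psrc (dcap d) = ptgt (dup d), psrc (ddown d) = ptgt (dcap d)
    & psrc (dsuff d) = ptgt (ddown d)] /\
  ptrs rho = ptrs (dpref d) ++ ptrs (dup d) ++ ptrs (dcap d) ++ ptrs (ddown d)
             ++ ptrs (dsuff d) /\
  low (dpref d) /\ low (dsuff d) /\
  ptrs (dup d) = flatten (nseq (da d) (sigp S)) /\
  ptrs (ddown d) = flatten (nseq (db d) (sign T)) /\
  Some (psrc (dcap d)).1 = base (sigp S) /\
  Some (ptgt (dcap d)).1 = base (sign T).

Definition good_normal_dec (S T : {set Q}) (rho : opath) (d : ndec) : Prop :=
  let A := `|eff (sigp S)|%N in
  let B := `|eff (sign T)|%N in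
  normal_dec S T rho d /\
  (da d * A <= 2 * len (dcap d) + 2 * lcmn A B)%N /\
  (db d * B <= 2 * len (dcap d) + 2 * lcmn A B)%N /\
  (forall s, infix s (ptrs (dcap d)) -> is_cycle s ->
                ~~ (gcdn A B %| `|eff s|)%N) /\
  (n_states < (ptgt (dup d)).2)%N /\ (n_states < (psrc (ddown d)).2)%N /\
  (* (vii) *) uniq (cfgs (dpref d) ++ cfgs (dsuff d)).

End Normal.

Fixpoint chain (c : config Q) (ps : seq opath) : Prop :=
  if ps is p :: ps' then psrc p = c /\ chain (ptgt p) ps' else True.

Definition concat_of (rho : opath) (ps : seq opath) : Prop :=
  chain (psrc rho) ps /\ ptrs rho = flatten (map ptrs ps).

Definition min_low_arc (p : opath) : Prop :=
  is_arc p /\ low p /\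
  forall p', is_arc p' -> low p' -> psrc p' = psrc p -> ptgt p' = ptgt p ->
    (len p <= len p')%N.

End OCSDefs.

(* Main.v *)
Require Import Defs.
From mathcomp Require Import all_boot all_order all_algebra.
From mathcomp Require Import zify.
Set Implicit Arguments. Unset Strict Implicit. Unset Printing Implicit Defensive.

Definition dl {X : Type} (s : seq X) := take (size s).-1 s.

Lemma dl_cat {X : Type} (s1 s2 : seq X) : 0 < size s2 -> dl (s1 ++ s2) = s1 ++ dl s2.
Proof.
case: s2 => // y s2 _. rewrite /dl size_cat /= addnS /= take_cat ltnNge leq_addr /= addKn //.
Qed.

Section Helpers.
Variables (Q : finType) (O : OCS Q).
Implicit Types (c : config Q) (ts : seq (trans Q)).

Lemma size_cfgs_from c ts : size (cfgs_from c ts) = (size ts).+1.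
Proof. elim: ts c => [|t ts IH] c //=. by rewrite IH. Qed.

Lemma valid_from_cat c s1 s2 : valid_from O c (s1 ++ s2) =
  valid_from O c s1 && valid_from O (foldl (@step Q) c s1) s2.
Proof. elim: s1 c => [|t s1 IH] c //=. by rewrite IH andbA. Qed.

Lemma cfgs_from_cat c s1 s2 : cfgs_from c (s1 ++ s2) =
  dl (cfgs_from c s1) ++ cfgs_from (foldl (@step Q) c s1) s2.
Proof.
elim: s1 c => [|t s1 IH] c /=; first by rewrite /dl.
rewrite IH.
have Hne : 0 < size (cfgs_from (step c t) s1) by rewrite size_cfgs_from.
by rewrite (dl_cat [:: c] Hne).
Qed.

Lemma dl_cfgs_cat c s1 s2 : dl (cfgs_from c (s1 ++ s2)) =
  dl (cfgs_from c s1) ++ dl (cfgs_from (foldl (@step Q) c s1) s2).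
Proof. by rewrite cfgs_from_cat dl_cat // size_cfgs_from. Qed.

Lemma size_dl_cfgs c ts : size (dl (cfgs_from c ts)) = size ts.
Proof. by rewrite /dl size_cfgs_from size_takel // size_cfgs_from. Qed.

Lemma dl_cfgs_take c ts : dl (cfgs_from c ts) = take (size ts) (cfgs_from c ts).
Proof. by rewrite /dl size_cfgs_from. Qed.

Lemma dl_cfgs_chain c ps : chain c ps ->
  dl (cfgs_from c (flatten (map (@ptrs Q) ps))) = flatten (map (fun p => dl (cfgs p)) ps).
Proof.
elim: ps c => [|p ps IH] c /=; first by rewrite /dl.
case=> Hs Hc. rewrite dl_cfgs_cat -Hs.
have -> : foldl (@step Q) (psrc p) (ptrs p) = ptgt p by [].
by rewrite (IH _ Hc).
Qed.

Lemma nth_cfgs c ts k x0 : k <= size ts ->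
  nth x0 (cfgs_from c ts) k = foldl (@step Q) c (take k ts).
Proof.
elim: ts c k => [|t ts IH] c [|k] //= Hk. by rewrite IH.
Qed.

Lemma cut c ts i j x0 : valid_from O c ts -> i <= j -> j <= size ts ->
  nth x0 (cfgs_from c ts) i = nth x0 (cfgs_from c ts) j ->
  [/\ valid_from O c (take i ts ++ drop j ts),
      foldl (@step Q) c (take i ts ++ drop j ts) = foldl (@step Q) c ts &
      cfgs_from c (take i ts ++ drop j ts) = take i (cfgs_from c ts) ++ drop j (cfgs_from c ts)].
Proof.
move=> Hv Hij Hj. rewrite !nth_cfgs //; last by apply: leq_trans Hj.
move=> Heq.
have Hsi k : valid_from O c ts = valid_from O c (take k ts) &&
   valid_from O (foldl (@step Q) c (take k ts)) (drop k ts)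
  by rewrite -valid_from_cat cat_take_drop.
have EC k : cfgs_from c ts = dl (cfgs_from c (take k ts)) ++
   cfgs_from (foldl (@step Q) c (take k ts)) (drop k ts)
  by rewrite -cfgs_from_cat cat_take_drop.
split.
- rewrite valid_from_cat Heq.
  have := Hv; rewrite (Hsi i) => /andP[-> _].
  by move: Hv; rewrite (Hsi j) => /andP[_ ->].
- by rewrite foldl_cat Heq -foldl_cat cat_take_drop.
- rewrite cfgs_from_cat Heq. congr (_ ++ _).
  + rewrite (EC i) take_size_cat // size_dl_cfgs size_takel //.
    by apply: leq_trans Hj.
  + by rewrite (EC j) drop_size_cat // size_dl_cfgs size_takel.
Qed.

Lemma size_intermediate (p : opath Q) : size (intermediate p) = (len p).-1.
Proof.
have H : size (behead (cfgs p)) = len p by rewrite size_behead /cfgs size_cfgs_from.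
by rewrite /intermediate size_takel // H leq_pred.
Qed.

Lemma interP (p : opath Q) (f : pred (config Q)) x0 :
  all f (intermediate p) <-> (forall m, 0 < m < len p -> f (nth x0 (cfgs p) m)).
Proof.
split.
- move/(all_nthP x0) => H m /andP[Hm0 Hm].
  have := H m.-1. rewrite size_intermediate /intermediate nth_take; last by lia.
  rewrite nth_behead prednK //. apply. lia.
- move=> H; apply/(all_nthP x0) => k. rewrite size_intermediate => Hk.
  rewrite /intermediate nth_take // nth_behead. apply: H. lia.
Qed.

End Helpers.

Section H2.
Variables (Q : finType) (O : OCS Q).

Lemma min_low_uniq (p : opath Q) : min_low_arc O p -> uniq (dl (cfgs p)).
Proof.
case=> Harc [Hlow Hmin].
set x0 := psrc p.
case: (boolP (uniq _)) => // /(uniqPn x0) [i [j [Hij Hj Heq]]]; exfalso.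
have Hsz : size (dl (cfgs p)) = len p by rewrite /cfgs size_dl_cfgs.
rewrite Hsz /len in Hj.
move: Heq; rewrite /cfgs dl_cfgs_take !nth_take //; last by lia.
move=> Heq.
move: Harc => /and4P [Hv H0 Hz Hint].
have [Hv' Hf' Hc'] := cut Hv (ltnW Hij) (ltnW Hj) Heq.
set p' := OPath (psrc p) (take i (ptrs p) ++ drop j (ptrs p)).
have Hlen' : len p' = i + (len p - j).
  rewrite /len /= size_cat size_takel ?size_drop //; last lia.
have : (len p <= len p')%N; last by rewrite Hlen' /len; lia.
apply: Hmin => //.
- apply/and4P; split => //.
  + by rewrite /ptgt /= Hf'.
  + apply/(interP _ _ x0) => m /andP[Hm0 Hm].
    rewrite /cfgs /= Hc' nth_cat size_takel; last by rewrite size_cfgs_from; lia.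
    have HI := (proj1 (interP p _ x0) Hint).
    case: ifP => Hmi.
    * rewrite nth_take //. apply: HI. move: Hm; rewrite Hlen' /len; lia.
    * rewrite nth_drop. apply: HI. move: Hm; rewrite Hlen' /len; lia.
- apply/allP => x. rewrite /cfgs /= Hc' mem_cat => /orP[/mem_take|/mem_drop] Hx;
  exact: (allP Hlow).
Qed.

End H2.

Lemma head_flatten {X : eqType} (z : pred X) x0 (bs : seq (seq X)) :
  (forall b, b \in bs -> 0 < size b -> z (head x0 b)) -> 0 < size (flatten bs) ->
  z (head x0 (flatten bs)).
Proof.
elim: bs => [|b bs IH] //= Hh Hs.
case: b Hh Hs => [|y b] Hh Hs /=.
- apply: IH => // b' Hb'. apply: Hh. by rewrite in_cons Hb' orbT.
- exact: (Hh (y :: b) (mem_head _ _)).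
Qed.

Lemma disj {X : eqType} (z : pred X) x0 (bs : seq (seq X)) :
 (forall b, b \in bs -> 0 < size b -> z (head x0 b)) ->
 (forall p q k, p <= k -> k < q -> q < size (flatten bs) ->
    nth x0 (flatten bs) p = nth x0 (flatten bs) q -> ~~ z (nth x0 (flatten bs) k)) ->
 forall i j x, i < j -> j < size bs -> x \in nth [::] bs i -> x \in nth [::] bs j -> False.
Proof.
elim: bs => [|b bs IH] Hh HZ i j x Hij Hj //=.
have Hh' : forall b', b' \in bs -> 0 < size b' -> z (head x0 b').
  by move=> b' Hb'; apply: Hh; rewrite in_cons Hb' orbT.
case: j Hij Hj => [|j] //= Hij Hj.
case: i Hij => [|i] Hij /=.
- move=> Hxb Hxj.
  have HxF : x \in flatten bs.
    apply/flattenP. exists (nth [::] bs j) => //. by apply: mem_nth.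
  have HF : 0 < size (flatten bs) by case: (flatten bs) HxF.
  have HzF := head_flatten Hh' HF.
  have Hp : index x b < size b by rewrite index_mem.
  have Hq : index x (flatten bs) < size (flatten bs) by rewrite index_mem.
  have E1 : nth x0 (flatten (b :: bs)) (index x b) = x
    by rewrite /= nth_cat Hp nth_index.
  have E2 : nth x0 (flatten (b :: bs)) (size b + index x (flatten bs)) = x
    by rewrite /= nth_cat ltnNge leq_addr /= addKn nth_index.
  have Hsz : size (flatten (b :: bs)) = size b + size (flatten bs) by rewrite /= size_cat.
  case: (posnP (index x (flatten bs))) => Hi0.
  + have := HZ (index x b) (size b + index x (flatten bs)) (index x b) (leqnn _).
    rewrite E1 E2 Hsz. move/(_ ltac:(lia) ltac:(lia) erefl).
    by rewrite -E2 /= nth_cat ltnNge leq_addr /= addKn Hi0 nth0 HzF.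
  + have := HZ (index x b) (size b + index x (flatten bs)) (size b) (ltnW Hp).
    rewrite E1 E2 Hsz. move/(_ ltac:(lia) ltac:(lia) erefl).
    by rewrite /= nth_cat ltnn subnn nth0 HzF.
- move=> Hxi Hxj. apply: (IH Hh' _ i j x) => //.
  move=> p q k Hpk Hkq Hq E.
  have := HZ (size b + p) (size b + q) (size b + k) ltac:(lia) ltac:(lia).
  rewrite /= size_cat !nth_cat !ltnNge !leq_addr /= !addKn.
  by move/(_ ltac:(lia) E).
Qed.

Lemma uniq_flatten_disj {X : eqType} (Ls bs : seq (seq X)) :
  size Ls = size bs ->
  (forall i, i < size Ls -> uniq (nth [::] Ls i) /\ {subset nth [::] Ls i <= nth [::] bs i}) ->
  (forall i j x, i < j -> j < size bs -> x \in nth [::] bs i -> x \in nth [::] bs j -> False) ->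
  uniq (flatten Ls).
Proof.
elim: Ls bs => [|l Ls IH] [|b bs] //= [Hsz] H Hd.
rewrite cat_uniq. apply/and3P; split.
- by case: (H 0 erefl).
- apply/hasPn => x Hx; apply/negP => Hxl.
  case/flattenP: Hx => s Hs Hxs.
  case/(nthP [::]): Hs => j Hj Ej.
  have [_ Hsub0] := H 0 erefl.
  have [_ Hsubj] := H j.+1 Hj.
  apply: (Hd 0 j.+1 x) => //=; first by rewrite -Hsz.
  + exact: Hsub0.
  + apply: Hsubj => /=. by rewrite Ej.
- apply: (IH bs) => //.
  + move=> i Hi. exact: (H i.+1 Hi).
  + move=> i j x Hij Hj. exact: (Hd i.+1 j.+1 x).
Qed.

Lemma low_bound (Q : finType) (s : seq (config Q)) : uniq s ->
  (forall x, x \in s -> x.2 < 5 * #|Q|) -> size s <= 5 * #|Q| ^ 2.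
Proof.
move=> Hu Hs.
pose enc (x : config Q) := 5 * #|Q| * enum_rank x.1 + x.2.
rewrite -(size_map enc) -(size_iota 0 (5 * #|Q| ^ 2)).
apply: uniq_leq_size.
- rewrite map_inj_in_uniq // => [[q1 c1] [q2 c2]] H1 H2 /=.
  have h1 := Hs _ H1; have h2 := Hs _ H2.
  have r1 := ltn_ord (enum_rank q1); have r2 := ltn_ord (enum_rank q2).
  rewrite /enc /= in h1 h2 *.
  move=> E.
  have Er : nat_of_ord (enum_rank q1) = enum_rank q2.
    case: (ltngtP (enum_rank q1) (enum_rank q2)) => // Hl; exfalso.
    * have H := leq_mul (leqnn (5 * #|Q|)) Hl. rewrite mulnS in H.
      have := leq_trans H (leq_addr c2 _). rewrite -E addnC leq_add2l.
      by rewrite leqNgt h1.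
    * have H := leq_mul (leqnn (5 * #|Q|)) Hl. rewrite mulnS in H.
      have := leq_trans H (leq_addr c1 _). rewrite E addnC leq_add2l.
      by rewrite leqNgt h2.
  have Ec : c1 = c2 by move: E; rewrite Er; move/eqP; rewrite eqn_add2l => /eqP.
  by rewrite Ec (enum_rank_inj (ord_inj Er)).
- move=> y /mapP [x Hx ->]. rewrite mem_iota /= add0n /enc.
  have h := Hs _ Hx. have r : nat_of_ord (enum_rank x.1) < #|Q| := ltn_ord _.
  have H := leq_mul (leqnn (5 * #|Q|)) r. rewrite mulnS in H.
  have -> : 5 * #|Q| ^ 2 = 5 * #|Q| * #|Q| by rewrite mulnA.
  apply: leq_trans H. by rewrite [5 * #|Q| + _]addnC ltn_add2l.
Qed.
Unset Implicit Arguments.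

Theorem lemma3 (Q : finType) (O : OCS Q)
  (sigp sign : {set Q} -> seq (trans Q))
  (Hsigp : forall S, is_scc O S -> pos_enabled O S ->
     [&& is_cycle O (sigp S), simple (sigp S), contained S (sigp S)
       & (0 < eff (sigp S))%R])
  (Hsign : forall T, is_scc O T -> neg_enabled O T ->
     [&& is_cycle O (sign T), simple (sign T), contained T (sign T)
       & (eff (sign T) < 0)%R])
  (alpha beta : config Q) (Ha : alpha.2 = 0) (Hb : beta.2 = 0)
  (rho : opath Q) (Hrho : path_from_to O rho alpha beta)
  (Hmin : forall rho' : opath Q, path_from_to O rho' alpha beta ->
     zcount rho <= zcount rho')
  (rhos : seq (opath Q)) (Hcat : concat_of rho rhos)
  (Harcs : all (is_arc O) rhos)
  (inL : pred nat) (dec : nat -> ndec Q)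
  (HL : forall i, i < size rhos -> inL i ->
     min_low_arc O (nth (OPath alpha [::]) rhos i))
  (HN : forall i, i < size rhos -> ~~ inL i ->
     exists S T, good_normal_dec O sigp sign S T (nth (OPath alpha [::]) rhos i) (dec i)) :
  \sum_(i < size rhos | inL i) len (nth (OPath alpha [::]) rhos i)
  + \sum_(i < size rhos | ~~ inL i) (len (dpref (dec i)) + len (dsuff (dec i)))
  <= 5 * (n_states Q) ^ 2.
Proof.
set d := OPath alpha [::].
case: Hrho => Hv [Hsrc Htgt].
case: Hcat => Hchain Hts.
have HszC : size (cfgs rho) = (size (ptrs rho)).+1 by rewrite /cfgs size_cfgs_from.
have HZ : forall p q k, p <= k -> k < q -> q < size (cfgs rho) ->
    nth alpha (cfgs rho) p = nth alpha (cfgs rho) q -> (nth alpha (cfgs rho) k).2 != 0.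
  move=> p q k Hpk Hkq HqC Heq; apply/negP => /eqP Hk0.
  have [Hv' Hf' Hc'] := cut Hv (leq_trans Hpk (ltnW Hkq)) (ltac:(lia) : q <= size (ptrs rho)) Heq.
  change (cfgs_from (psrc rho) (ptrs rho)) with (cfgs rho) in Hc'.
  set rho' := OPath (psrc rho) (take p (ptrs rho) ++ drop q (ptrs rho)).
  have Hp' : path_from_to O rho' alpha beta.
    split => //. split => //. by rewrite /ptgt /= Hf'.
  have := Hmin rho' Hp'. rewrite /zcount.
  have -> : cfgs rho' = take p (cfgs rho) ++ drop q (cfgs rho) by [].
  rewrite -{1}(cat_take_drop p (cfgs rho)) -{1}(cat_take_drop (q-p) (drop p (cfgs rho))).
  rewrite drop_drop subnK; last by lia.
  rewrite !count_cat.
  have : 0 < count (fun c : config Q => c.2 == 0) (take (q-p) (drop p (cfgs rho))).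
    rewrite -has_count; apply/(has_nthP alpha); exists (k-p).
    - rewrite size_takel; first by lia.
      rewrite size_drop. lia.
    - rewrite nth_take; last by lia.
      by rewrite nth_drop subnKC // Hk0.
  lia.
set bs := map (fun p => dl (cfgs p)) rhos.
have HW : dl (cfgs rho) = flatten bs by rewrite /cfgs Hts dl_cfgs_chain // -Hts.
have HZW : forall p q k, p <= k -> k < q -> q < size (flatten bs) ->
    nth alpha (flatten bs) p = nth alpha (flatten bs) q ->
    ~~ (fun c : config Q => c.2 == 0) (nth alpha (flatten bs) k).
  move=> p q k Hpk Hkq; rewrite -HW /dl size_takel ?leq_pred // => Hq.
  rewrite (nth_take _ (_ : p < _)); last by lia.
  rewrite (nth_take _ (_ : q < _)); last by lia.
  rewrite (nth_take _ (_ : k < _)); last by lia.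
  move=> E. apply: (HZ p q k Hpk Hkq _ E). lia.
have Hh : forall b, b \in bs -> 0 < size b -> (fun c : config Q => c.2 == 0) (head alpha b).
  move=> b0 /(nthP [::]) [j Hj <-]. rewrite size_map in Hj.
  rewrite /bs (nth_map d) //.
  move: (all_nthP d Harcs j Hj) => /and4P[_ H0 _ _].
  rewrite /cfgs size_dl_cfgs dl_cfgs_take.
  by case: (ptrs (nth d rhos j)) => [|t ts] //= _.
have Hd := @disj _ (fun c : config Q => c.2 == 0) alpha bs Hh HZW.
pose Li i := if inL i then dl (cfgs (nth d rhos i))
             else dl (cfgs (dpref (dec i))) ++ dl (cfgs (dsuff (dec i))).
set m := size rhos.
pose Ls := map Li (iota 0 m).
have HLi : forall i, i < m -> [/\ uniq (Li i), {subset Li i <= nth [::] bs i} &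
    forall x, x \in Li i -> x.2 < 5 * #|Q|].
  move=> i Hi. rewrite /Li /bs (nth_map d) //. case: (boolP (inL i)) => HiL.
  - have Hml := HL i Hi HiL. case: (Hml) => Harc [Hlow _]. split.
    + exact: min_low_uniq Hml.
    + by [].
    + move=> x /mem_take Hx. exact: (allP Hlow).
  - have [S [T [Hnd [_ [_ [_ [_ [_ Hun]]]]]]]] := HN i Hi HiL.
    case: Hnd => _ [_ [_ [[Hs1 Hs2 Hs3 Hs4 Hs5] [Hsplit [Hlp [Hls _]]]]]].
    set pr := nth d rhos i in Hs1 Hsplit *.
    have Hch : chain (psrc pr) [:: dpref (dec i); dup (dec i); dcap (dec i); ddown (dec i); dsuff (dec i)].
      by rewrite /=; do !split.
    have Hdl := dl_cfgs_chain Hch. rewrite /= !cats0 -Hsplit in Hdl.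
    split.
    + apply: (subseq_uniq _ Hun). apply: cat_subseq; exact: take_subseq.
    + move=> x. have -> : dl (cfgs pr) = dl (cfgs_from (psrc pr) (ptrs pr)) by [].
      rewrite Hdl !mem_cat => /orP [H|H]; by rewrite H ?orbT.
    + move=> x; rewrite mem_cat => /orP[/mem_take H|/mem_take H];
        [exact: (allP Hlp)|exact: (allP Hls)].
have Hu : uniq (flatten Ls).
  apply: (uniq_flatten_disj (bs := bs)).
  - by rewrite /Ls /bs !size_map size_iota.
  - move=> i; rewrite size_map size_iota => Hi.
    rewrite (nth_map 0) ?size_iota // nth_iota // add0n.
    by case: (HLi i Hi).
  - move=> i j x Hij Hj. exact: Hd.
have Hlow : forall x, x \in flatten Ls -> x.2 < 5 * #|Q|.
  move=> x /flattenP [s /mapP [i Hi ->] Hx].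
  rewrite mem_iota add0n in Hi. by case: (HLi i Hi) => _ _ /(_ x Hx).
have Hbd := low_bound Hu Hlow.
suff -> : \sum_(i < m | inL i) len (nth d rhos i) +
  \sum_(i < m | ~~ inL i) (len (dpref (dec i)) + len (dsuff (dec i))) = size (flatten Ls)
  by exact: Hbd.
rewrite size_flatten /shape /Ls -map_comp sumnE big_map.
rewrite big_mkcond [X in _ + X]big_mkcond -big_split /=.
have -> : \sum_(j <- iota 0 m) size (Li j) = \sum_(i < m) size (Li i).
  have -> : iota 0 m = index_iota 0 m by rewrite /index_iota subn0.
  by rewrite big_mkord.
apply: eq_bigr => i _. rewrite /Li.
case: (inL i) => /=.
- by rewrite addn0 /cfgs size_dl_cfgs.
- by rewrite add0n size_cat /cfgs !size_dl_cfgs.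
Qed.
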